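(* Let $Y$ be a set and $y\in Y$. The centralizer of $y$ in $R\mathfrak L[Y]$ is exactly the Lie ideal $\langle y\rangle$ of $R\mathfrak L[Y]$ generated by $y$.
   Context: $R\mathfrak L[Y]$ is the Lie ring generated by $Y$ subject to $[y_1,[y_2,[\cdots[y_{s-1},y_s]\cdots]]]=0$ for every $s\geq2$ and every $(y_1,\dots,y_s)\in Y^s$ with $y_i=y_j$ for some $i\neq j$. The centralizer of $y$ is $\{u\in R\mathfrak L[Y]:[u,y]=0\}$. *)

(* Defs.v *)
(* The relatively free Lie ring RL[Y] is presented as the quotient
   of the syntax of Lie-ring expressions over generators Y by the smallest
   congruence making it a Lie ring (over Z) and killing all right-normed
   commutators with a repeated letter.  We never form the quotient type:
   elements of RL[Y] are expressions, equality in RL[Y] is [rl_eq]. *)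
From Stdlib Require Import List.
Import ListNotations.

Section RL.
Variable Y : Type.

Inductive lexpr : Type :=
| LGen : Y -> lexpr
| LZero : lexpr
| LAdd : lexpr -> lexpr -> lexpr
| LOpp : lexpr -> lexpr
| LBr : lexpr -> lexpr -> lexpr.

(* right-normed commutator [y1,[y2,[...[y_{s-1},y_s]...]]] ; [] ↦ 0 (unused) *)
Fixpoint rn_comm (ys : list Y) : lexpr :=
  match ys with
  | [] => LZero
  | [y] => LGen y
  | y :: ys' => LBr (LGen y) (rn_comm ys')
  end.

Definition has_repeat (ys : list Y) : Prop :=
  exists i j a, i <> j /\ nth_error ys i = Some a /\ nth_error ys j = Some a.

Inductive rl_eq : lexpr -> lexpr -> Prop :=
| rl_refl x : rl_eq x x
| rl_sym x y : rl_eq x y -> rl_eq y x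
| rl_trans x y z : rl_eq x y -> rl_eq y z -> rl_eq x z
| rl_add_cong x x' y y' : rl_eq x x' -> rl_eq y y' -> rl_eq (LAdd x y) (LAdd x' y')
| rl_opp_cong x x' : rl_eq x x' -> rl_eq (LOpp x) (LOpp x')
| rl_br_cong x x' y y' : rl_eq x x' -> rl_eq y y' -> rl_eq (LBr x y) (LBr x' y')
| rl_addA x y z : rl_eq (LAdd x (LAdd y z)) (LAdd (LAdd x y) z)
| rl_addC x y : rl_eq (LAdd x y) (LAdd y x)
| rl_add0 x : rl_eq (LAdd LZero x) x
| rl_addN x : rl_eq (LAdd (LOpp x) x) LZero
| rl_brDl x y z : rl_eq (LBr (LAdd x y) z) (LAdd (LBr x z) (LBr y z))
| rl_brDr x y z : rl_eq (LBr x (LAdd y z)) (LAdd (LBr x y) (LBr x z))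
| rl_brxx x : rl_eq (LBr x x) LZero
| rl_jacobi x y z :
    rl_eq (LAdd (LBr x (LBr y z)) (LAdd (LBr y (LBr z x)) (LBr z (LBr x y)))) LZero
| rl_rel ys : has_repeat ys -> rl_eq (rn_comm ys) LZero.

Definition rl_centralizer (y : Y) (u : lexpr) : Prop :=
  rl_eq (LBr u (LGen y)) LZero.

Inductive rl_ideal_gen (y : Y) : lexpr -> Prop :=
| rli_gen : rl_ideal_gen y (LGen y)
| rli_zero : rl_ideal_gen y LZero
| rli_add a b : rl_ideal_gen y a -> rl_ideal_gen y b -> rl_ideal_gen y (LAdd a b)
| rli_opp a : rl_ideal_gen y a -> rl_ideal_gen y (LOpp a)
| rli_brl a b : rl_ideal_gen y a -> rl_ideal_gen y (LBr b a)
| rli_brr a b : rl_ideal_gen y a -> rl_ideal_gen y (LBr a b)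
| rli_eq a b : rl_eq a b -> rl_ideal_gen y a -> rl_ideal_gen y b.

End RL.
Arguments LGen {Y}.
Arguments LZero {Y}.

(* Main.v *)
Require Import Defs.
From Stdlib Require Import List Permutation ZArith Lia Setoid Morphisms ClassicalEpsilon FunctionalExtensionality PropExtensionality.
Import ListNotations.

Section Main.
Variable Y : Type.
Local Notation E := (lexpr Y).
Local Notation "a =~ b" := (rl_eq Y a b) (at level 70).
Local Notation "a +' b" := (LAdd Y a b) (at level 50, left associativity).
Local Notation "-' a" := (LOpp Y a) (at level 35, a at level 35).
Local Notation "[[ a , b ]]" := (LBr Y a b).
Local Notation rn := (rn_comm Y).

Global Instance rl_equiv : Equivalence (rl_eq Y).
Proof. split; [intro; apply rl_refl | intros ??; apply rl_sym | intros ???; apply rl_trans]. Qed.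
Global Instance add_proper : Proper (rl_eq Y ==> rl_eq Y ==> rl_eq Y) (LAdd Y).
Proof. intros ?????. now apply rl_add_cong. Qed.
Global Instance opp_proper : Proper (rl_eq Y ==> rl_eq Y) (LOpp Y).
Proof. intros ???. now apply rl_opp_cong. Qed.
Global Instance br_proper : Proper (rl_eq Y ==> rl_eq Y ==> rl_eq Y) (LBr Y).
Proof. intros ?????. now apply rl_br_cong. Qed.

Lemma add0r (x : E) : x +' LZero =~ x.
Proof. rewrite rl_addC. apply rl_add0. Qed.
Lemma addrN (x : E) : x +' -' x =~ LZero.
Proof. rewrite rl_addC. apply rl_addN. Qed.
Lemma opp_uniq (a b : E) : a +' b =~ LZero -> b =~ -' a.
Proof.
  intro H. rewrite <- (rl_add0 _ b). rewrite <- (rl_addN _ a).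
  rewrite <- rl_addA. rewrite H. apply add0r.
Qed.
Lemma oppK (a : E) : -' -' a =~ a.
Proof. symmetry. apply opp_uniq. apply rl_addN. Qed.
Lemma opp_add (a b : E) : -' (a +' b) =~ -' a +' -' b.
Proof.
  symmetry. apply opp_uniq.
  rewrite (rl_addC _ (-' a) (-' b)).
  rewrite rl_addA. rewrite <- (rl_addA _ a b (-' b)). rewrite addrN, add0r. apply addrN.
Qed.
Lemma opp0 : -' LZero =~ (LZero : E).
Proof. symmetry. apply opp_uniq. apply rl_add0. Qed.
Lemma dbl0 (z : E) : z +' z =~ z -> z =~ LZero.
Proof.
  intro H. transitivity (z +' (z +' -' z)).
  - rewrite addrN. symmetry. apply add0r.
  - rewrite rl_addA, H. apply addrN.
Qed.
Lemma br0l (x : E) : [[LZero, x]] =~ LZero.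
Proof. apply dbl0. rewrite <- rl_brDl. now rewrite rl_add0. Qed.
Lemma br0r (x : E) : [[x, LZero]] =~ LZero.
Proof. apply dbl0. rewrite <- rl_brDr. now rewrite rl_add0. Qed.
Lemma brNl (a x : E) : [[-' a, x]] =~ -' [[a, x]].
Proof. apply opp_uniq. rewrite <- rl_brDl, addrN. apply br0l. Qed.
Lemma brNr (a x : E) : [[x, -' a]] =~ -' [[x, a]].
Proof. apply opp_uniq. rewrite <- rl_brDr, addrN. apply br0r. Qed.
Lemma anticomm (a b : E) : [[a, b]] =~ -' [[b, a]].
Proof.
  apply opp_uniq.
  pose proof (rl_brxx _ (a +' b)) as H.
  rewrite rl_brDl, !rl_brDr, !rl_brxx in H.
  rewrite rl_add0, add0r in H. now rewrite rl_addC.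
Qed.
Lemma jac' (x D v : E) : [[ [[x, D]], v ]] =~ [[x, [[D, v]] ]] +' -' [[D, [[x, v]] ]].
Proof.
  pose proof (rl_jacobi _ x D v) as H.
  rewrite (anticomm v x), (anticomm v ([[x, D]])), brNr in H.
  rewrite rl_addA in H.
  apply opp_uniq in H. rewrite <- (oppK ([[ [[x, D]], v]])). rewrite H. apply oppK.
Qed.
Lemma add_swap (a b c : E) : a +' (b +' c) =~ b +' (a +' c).
Proof. rewrite !rl_addA. now rewrite (rl_addC _ a b). Qed.


Definition deq (a b : Y) : {a = b} + {a <> b} := excluded_middle_informative (a = b).
Definition ldeq := list_eq_dec deq.
Definition delta (u w : list Y) : Z := if ldeq u w then 1%Z else 0%Z.
Lemma delta_eq u : delta u u = 1%Z.
Proof. unfold delta; destruct (ldeq u u); congruence. Qed.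
Lemma delta_neq u w : u <> w -> delta u w = 0%Z.
Proof. unfold delta; destruct (ldeq u w); congruence. Qed.
Lemma delta_nz u w : delta u w <> 0%Z -> u = w.
Proof. unfold delta; destruct (ldeq u w); congruence. Qed.

Opaque delta.
Local Open Scope Z_scope.

Fixpoint conv (f g : list Y -> Z) (w : list Y) : Z :=
  match w with
  | [] => f [] * g []
  | x :: w' => f [] * g w + conv (fun a => f (x :: a)) g w'
  end.

Fixpoint sem (e : E) : list Y -> Z :=
  match e with
  | LGen z => delta [z]
  | LZero => fun _ => 0
  | LAdd _ a b => fun w => sem a w + sem b w
  | LOpp _ a => fun w => - sem a w
  | LBr _ a b => fun w => conv (sem a) (sem b) w - conv (sem b) (sem a) w
  end.

Lemma conv_ext_split w : forall f f' g g',
  (forall a b, w = a ++ b -> f a = f' a) -> (forall a b, w = a ++ b -> g b = g' b) ->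
  conv f g w = conv f' g' w.
Proof.
  induction w as [|x w IH]; intros f f' g g' Hf Hg; simpl.
  - rewrite (Hf [] []), (Hg [] []); reflexivity.
  - rewrite (Hf [] (x :: w)), (Hg [] (x :: w)) by reflexivity. f_equal.
    apply IH.
    + intros a b ->. apply (Hf (x :: a) b). reflexivity.
    + intros a b ->. apply (Hg (x :: a) b). reflexivity.
Qed.
Lemma conv_ext f f' g g' w : (forall a, f a = f' a) -> (forall b, g b = g' b) ->
  conv f g w = conv f' g' w.
Proof. intros; apply conv_ext_split; auto. Qed.

Lemma conv_zerol g w : conv (fun _ => 0) g w = 0.
Proof.
  revert g; induction w; intros; simpl; [ring| rewrite IHw; ring].
Qed.
Lemma conv_zeror w : forall f, conv f (fun _ => 0) w = 0.
Proof.
  induction w; intros; simpl; [ring| rewrite IHw; ring].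
Qed.
Lemma conv_addl w : forall p q h, conv (fun a => p a + q a) h w = conv p h w + conv q h w.
Proof.
  induction w; intros; simpl. ring. rewrite IHw. ring.
Qed.
Lemma conv_oppl w : forall p h, conv (fun a => - p a) h w = - conv p h w.
Proof.
  induction w; intros; simpl. ring. rewrite IHw. ring.
Qed.
Lemma conv_scall w : forall c p h, conv (fun a => c * p a) h w = c * conv p h w.
Proof.
  induction w; intros; simpl. ring. rewrite IHw. ring.
Qed.
Lemma conv_subl p q h w : conv (fun a => p a - q a) h w = conv p h w - conv q h w.
Proof.
  rewrite (conv_ext (fun a => p a - q a) (fun a => p a + (- q a)) h h) by (intros; ring || reflexivity).
  rewrite conv_addl, conv_oppl. ring.
Qed.
Lemma conv_addr w : forall f p q, conv f (fun a => p a + q a) w = conv f p w + conv f q w.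
Proof.
  induction w; intros; simpl. ring. rewrite IHw. ring.
Qed.
Lemma conv_oppr w : forall f p, conv f (fun a => - p a) w = - conv f p w.
Proof.
  induction w; intros; simpl. ring. rewrite IHw. ring.
Qed.
Lemma conv_subr f p q w : conv f (fun a => p a - q a) w = conv f p w - conv f q w.
Proof.
  rewrite (conv_ext f f (fun a => p a - q a) (fun a => p a + (- q a))) by (intros; ring || reflexivity).
  rewrite conv_addr, conv_oppr. ring.
Qed.
Lemma conv_assoc w : forall f g h, conv (conv f g) h w = conv f (conv g h) w.
Proof.
  induction w as [|x w IH]; intros; simpl. ring.
  rewrite conv_addl, conv_scall, IH. ring.
Qed.

Lemma conv_support w : forall f g, conv f g w <> 0 ->
  exists a b, w = a ++ b /\ f a <> 0 /\ g b <> 0.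
Proof.
  induction w as [|x w IH]; intros f g H; simpl in H.
  - exists [], []. split; [reflexivity|]. split; intro C; apply H; rewrite C; ring.
  - destruct (Z.eq_dec (f [] * g (x :: w)) 0) as [E0|E0].
    + rewrite E0 in H. simpl in H. destruct (IH _ _ H) as (a & b & -> & Ha & Hb).
      exists (x :: a), b. auto.
    + exists [], (x :: w). split; [reflexivity|]. split; intro C; apply E0; rewrite C; ring.
Qed.

Lemma conv_nil_l w : forall g, conv (delta []) g w = g w.
Proof.
  destruct w as [|x w]; intros; simpl.
  - rewrite delta_eq. ring.
  - rewrite delta_eq.
    rewrite (conv_ext (fun a => delta [] (x :: a)) (fun _ => 0) g g).
    + rewrite conv_zerol. ring.
    + intros; apply delta_neq; discriminate.
    + reflexivity.
Qed.

Lemma conv_d1_l x w g : conv (delta [x]) g w =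
  match w with [] => 0 | x' :: w' => if deq x x' then g w' else 0 end.
Proof.
  destruct w as [|x' w]; simpl.
  - rewrite delta_neq by discriminate. ring.
  - rewrite (delta_neq [x] []) by discriminate.
    destruct (deq x x') as [<-|Hn].
    + rewrite (conv_ext (fun a => delta [x] (x :: a)) (delta []) g g).
      * rewrite conv_nil_l. ring.
      * intros a. destruct a; [rewrite !delta_eq; reflexivity|].
        rewrite !delta_neq by discriminate. reflexivity.
      * reflexivity.
    + rewrite (conv_ext (fun a => delta [x] (x' :: a)) (fun _ => 0) g g).
      * rewrite conv_zerol. ring.
      * intros a. apply delta_neq. intro C; inversion C; congruence.
      * reflexivity.
Qed.

Lemma conv_d1_r_snoc x w : forall g, conv g (delta [x]) (w ++ [x]) = g w.
Proof.
  induction w as [|z w IH]; intros; simpl.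
  - rewrite delta_eq, (delta_neq [x] []) by discriminate. ring.
  - rewrite (delta_neq [x] (z :: w ++ [x])).
    + rewrite IH. ring.
    + intro C. inversion C. destruct w; discriminate.
Qed.


Lemma rn_cons x l : l <> [] -> rn (x :: l) = [[LGen x, rn l]].
Proof. destruct l; [congruence|reflexivity]. Qed.

Lemma sub_nz a b : a - b <> 0 -> a <> 0 \/ b <> 0.
Proof. lia. Qed.

Lemma sem_rn_perm ys : forall w, sem (rn ys) w <> 0 -> Permutation w ys.
Proof.
  induction ys as [|x l IH]; intros w H.
  - simpl in H. congruence.
  - destruct l as [|z l'].
    + simpl in H. apply delta_nz in H. subst. apply Permutation_refl.
    + rewrite rn_cons in H by discriminate. simpl in H.
      destruct (sub_nz _ _ H) as [H1|H1]; apply conv_support in H1 as (a & b & -> & Ha & Hb).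
      * apply delta_nz in Ha. subst a. simpl. apply perm_skip. apply IH; exact Hb.
      * apply delta_nz in Hb. subst b.
        eapply Permutation_trans; [|apply Permutation_sym, Permutation_cons_append].
        apply Permutation_app_tail. apply IH; exact Ha.
Qed.

Lemma repeat_not_nodup ys : has_repeat Y ys -> ~ NoDup ys.
Proof.
  intros (i & j & a & Hij & Hi & Hj) Hn.
  apply Hij. apply (proj1 (NoDup_nth_error ys) Hn).
  - apply nth_error_Some. congruence.
  - congruence.
Qed.

Lemma sound a b : rl_eq Y a b -> forall w, NoDup w -> sem a w = sem b w.
Proof.
  induction 1; intros w Hw; simpl.
  - reflexivity.
  - symmetry; auto.
  - rewrite IHrl_eq1, IHrl_eq2 by exact Hw. reflexivity.
  - rewrite IHrl_eq1, IHrl_eq2 by exact Hw. reflexivity.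
  - rewrite IHrl_eq by exact Hw. reflexivity.
  - assert (HA : forall p q, w = p ++ q -> NoDup p /\ NoDup q).
    { intros p q ->. split; [eapply NoDup_app_remove_r|eapply NoDup_app_remove_l]; eauto. }
    f_equal; apply conv_ext_split; intros p q Hpq; destruct (HA p q Hpq);
      first [apply IHrl_eq1 | apply IHrl_eq2]; assumption.
  - ring.
  - ring.
  - ring.
  - ring.
  - rewrite conv_addl, conv_addr. ring.
  - rewrite conv_addl, conv_addr. ring.
  - ring.
  - rewrite !conv_subr, !conv_subl, !conv_assoc. ring.
  - destruct (Z.eq_dec (sem (rn ys) w) 0) as [E0|E0]; [exact E0|].
    exfalso. apply sem_rn_perm in E0. apply (repeat_not_nodup ys H).
    eapply Permutation_NoDup; eauto.
Qed.


Local Close Scope Z_scope.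

Definition term (f : list Y -> E) (p : bool * list Y) : E :=
  if fst p then f (snd p) else -' f (snd p).
Fixpoint lsum (f : list Y -> E) (L : list (bool * list Y)) : E :=
  match L with [] => LZero | p :: L' => term f p +' lsum f L' end.
Definition flip (L : list (bool * list Y)) := map (fun p => (negb (fst p), snd p)) L.
Definition mapw (h : list Y -> list Y) (L : list (bool * list Y)) :=
  map (fun p => (fst p, h (snd p))) L.
Fixpoint ad (a : list Y) (v : E) : E :=
  match a with [] => v | x :: a' => [[LGen x, ad a' v]] end.

Lemma lsum_app f L1 L2 : lsum f (L1 ++ L2) =~ lsum f L1 +' lsum f L2.
Proof.
  induction L1 as [|p L1 IH]; simpl.
  - symmetry; apply rl_add0.
  - rewrite IH. apply rl_addA.
Qed.
Lemma lsum_flip f L : lsum f (flip L) =~ -' lsum f L.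
Proof.
  induction L as [|[s v] L IH]; simpl.
  - symmetry; apply opp0.
  - rewrite IH, opp_add. unfold term; destruct s; simpl.
    + reflexivity.
    + now rewrite oppK.
Qed.
Lemma lsum_ext f g L : (forall v, f v =~ g v) -> lsum f L =~ lsum g L.
Proof.
  intro H. induction L as [|[s v] L IH]; simpl; [reflexivity|].
  unfold term; destruct s; simpl; now rewrite H, IH.
Qed.
Lemma lsum_mapw f h L : lsum f (mapw h L) = lsum (fun v => f (h v)) L.
Proof. induction L as [|[s v] L IH]; simpl; [reflexivity|]. now rewrite IH. Qed.
Lemma lsum_brl f L z : [[lsum f L, z]] =~ lsum (fun v => [[f v, z]]) L.
Proof.
  induction L as [|[s v] L IH]; simpl; [apply br0l|].
  rewrite rl_brDl, IH. unfold term; destruct s; simpl; [reflexivity|]. now rewrite brNl.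
Qed.
Lemma lsum_brr f L z : [[z, lsum f L]] =~ lsum (fun v => [[z, f v]]) L.
Proof.
  induction L as [|[s v] L IH]; simpl; [apply br0r|].
  rewrite rl_brDr, IH. unfold term; destruct s; simpl; [reflexivity|]. now rewrite brNr.
Qed.
Global Instance ad_proper a : Proper (rl_eq Y ==> rl_eq Y) (ad a).
Proof. intros x x' H. induction a; simpl; [exact H|]. now rewrite IHa. Qed.
Lemma ad_opp a x : ad a (-' x) =~ -' ad a x.
Proof. induction a; simpl; [reflexivity|]. rewrite IHa. apply brNr. Qed.
Lemma ad_add a x z : ad a (x +' z) =~ ad a x +' ad a z.
Proof. induction a; simpl; [reflexivity|]. rewrite IHa. apply rl_brDr. Qed.
Lemma ad_zero a : ad a LZero =~ LZero.
Proof. induction a; simpl; [reflexivity|]. rewrite IHa. apply br0r. Qed.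
Lemma ad_lsum a f L : ad a (lsum f L) =~ lsum (fun v => ad a (f v)) L.
Proof.
  induction L as [|[s v] L IH]; simpl; [apply ad_zero|].
  rewrite ad_add, IH. unfold term; destruct s; simpl; [reflexivity|]. now rewrite ad_opp.
Qed.
Lemma ad_app a b v : ad (a ++ b) v = ad a (ad b v).
Proof. induction a; simpl; [reflexivity|]. now rewrite IHa. Qed.
Lemma ad_rn a b : b <> [] -> ad a (rn b) = rn (a ++ b).
Proof.
  intro Hb. induction a as [|x a IH]; simpl; [reflexivity|].
  rewrite IH. symmetry. apply rn_cons. destruct a; simpl; [exact Hb|discriminate].
Qed.

Lemma ex_nf_proper (P : list Y -> Prop) g e e' : e =~ e' ->
  (exists M, Forall (fun q => P (snd q)) M /\ e' =~ lsum g M) ->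
  exists M, Forall (fun q => P (snd q)) M /\ e =~ lsum g M.
Proof. intros H (M & HM & HE). exists M. split; [exact HM|]. now rewrite H. Qed.

Lemma lsum_exists (P : list Y -> Prop) f g L :
  (forall p, In p L -> exists M, Forall (fun q => P (snd q)) M /\ f (snd p) =~ lsum g M) ->
  exists M, Forall (fun q => P (snd q)) M /\ lsum f L =~ lsum g M.
Proof.
  induction L as [|[s v] L IH]; intro H.
  - exists []. split; [constructor|reflexivity].
  - destruct (H (s, v) (or_introl eq_refl)) as (M1 & HP1 & HE1).
    destruct IH as (M2 & HP2 & HE2). { intros p Hp. apply H. right. exact Hp. }
    exists ((if s then M1 else flip M1) ++ M2). split.
    + apply Forall_app. split; [|exact HP2]. destruct s; [exact HP1|].
      unfold flip. apply Forall_map. exact HP1.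
    + rewrite lsum_app. simpl. rewrite HE2. unfold term; destruct s; simpl.
      * now rewrite HE1.
      * now rewrite lsum_flip, HE1.
Qed.

Lemma Forall_mapw (Q : list Y -> Prop) h L :
  Forall (fun p => Q (h (snd p))) L -> Forall (fun p => Q (snd p)) (mapw h L).
Proof. intro H. unfold mapw. apply Forall_map. exact H. Qed.
Lemma Forall_flip (Q : list Y -> Prop) L :
  Forall (fun p => Q (snd p)) L -> Forall (fun p => Q (snd p)) (flip L).
Proof. intro H. unfold flip. apply Forall_map. exact H. Qed.

Lemma expand d : d <> [] -> forall v, exists L,
  Forall (fun p => Permutation (snd p) d) L /\ [[rn d, v]] =~ lsum (fun e => ad e v) L.
Proof.
  induction d as [|x d IH]; [congruence|]. intros _ v. destruct d as [|z d'].
  - exists [(true, [x])]. split.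
    + constructor; [apply Permutation_refl|constructor].
    + simpl. unfold term; simpl. symmetry. apply add0r.
  - rewrite rn_cons by discriminate.
    destruct (IH ltac:(discriminate) v) as (L1 & P1 & H1).
    destruct (IH ltac:(discriminate) ([[LGen x, v]])) as (L2 & P2 & H2).
    exists (mapw (cons x) L1 ++ flip (mapw (fun e => e ++ [x]) L2)). split.
    + apply Forall_app. split.
      * apply (Forall_mapw (fun w => Permutation w (x :: z :: d'))). eapply Forall_impl; [|exact P1]. intros p Hp. simpl. now apply perm_skip.
      * apply (Forall_flip (fun w => Permutation w (x :: z :: d'))), (Forall_mapw (fun w => Permutation w (x :: z :: d'))). eapply Forall_impl; [|exact P2]. intros p Hp. simpl.
        eapply Permutation_trans; [|apply Permutation_sym, Permutation_cons_append].
        apply Permutation_app_tail. exact Hp.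
    + rewrite jac', H1, H2. rewrite lsum_app, lsum_flip, !lsum_mapw, lsum_brr. simpl.
      apply add_proper; [reflexivity|]. apply opp_proper.
      apply lsum_ext. intro e. rewrite ad_app. reflexivity.
Qed.

Variable y0 : Y.
Definition setw (w : list Y) : Y -> Prop := fun t => In t w.
Definition pick (S : Y -> Prop) : Y := epsilon (inhabits y0) S.
Definition canon (w : list Y) : Prop := NoDup w /\ exists w', w = w' ++ [pick (setw w)].

Lemma pick_in w : w <> [] -> In (pick (setw w)) w.
Proof.
  intro H. unfold pick. apply (epsilon_spec (inhabits y0) (setw w)).
  destruct w as [|x w]; [congruence|]. exists x. left. reflexivity.
Qed.
Lemma setw_perm w w' : Permutation w w' -> setw w = setw w'.
Proof.
  intro H. apply functional_extensionality. intro t. apply propositional_extensionality.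
  unfold setw. split; apply Permutation_in; [exact H|apply Permutation_sym; exact H].
Qed.

Lemma move_last c m : In m c -> exists L,
  Forall (fun p => Permutation (snd p) c /\ exists w', snd p = w' ++ [m]) L /\ rn c =~ lsum rn L.
Proof.
  intro Hm. destruct (in_split _ _ Hm) as (c1 & c2 & ->).
  destruct c2 as [|z c2'].
  - exists [(true, c1 ++ [m])]. split.
    + constructor; [|constructor]. simpl. split; [apply Permutation_refl|eauto].
    + simpl. unfold term; simpl. symmetry. apply add0r.
  - rewrite <- ad_rn by discriminate. rewrite rn_cons by discriminate.
    destruct (expand (z :: c2') ltac:(discriminate) (LGen m)) as (L2 & P2 & H2).
    exists (flip (mapw (fun e => c1 ++ e ++ [m]) L2)). split.
    + apply (Forall_flip (fun w => Permutation w (c1 ++ m :: z :: c2') /\ exists w', w = w' ++ [m])), (Forall_mapw (fun w => Permutation w (c1 ++ m :: z :: c2') /\ exists w', w = w' ++ [m])). eapply Forall_impl; [|exact P2]. intros p Hp. simpl. split.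
      * apply Permutation_app_head.
        eapply Permutation_trans; [apply Permutation_sym, Permutation_cons_append|].
        now apply perm_skip.
      * exists (c1 ++ snd p). now rewrite app_assoc.
    + rewrite anticomm, H2, ad_opp, ad_lsum.
      rewrite lsum_flip, lsum_mapw. apply opp_proper. apply lsum_ext. intro e.
      rewrite <- ad_app. change (LGen m) with (rn [m]). rewrite ad_rn by discriminate.
      rewrite app_assoc. reflexivity.
Qed.

Lemma notnodup_repeat c : ~ NoDup c -> has_repeat Y c.
Proof.
  induction c as [|x c IH]; intro H.
  - exfalso. apply H. constructor.
  - destruct (classic (In x c)) as [Hi|Hi].
    + destruct (In_nth_error _ _ Hi) as (n & Hn). exists 0, (S n), x. simpl. auto.
    + assert (~ NoDup c) as Hc. { intro Hc. apply H. constructor; assumption. }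
      destruct (IH Hc) as (i & j & a & Hij & Hi' & Hj'). exists (S i), (S j), a. simpl. auto.
Qed.

Lemma to_canon c : exists M, Forall (fun p => canon (snd p)) M /\ rn c =~ lsum rn M.
Proof.
  destruct (classic (NoDup c)) as [Hn|Hn].
  - destruct c as [|x c'].
    + exists []. split; [constructor|reflexivity].
    + set (m := pick (setw (x :: c'))).
      assert (Hm : In m (x :: c')) by (apply pick_in; discriminate).
      destruct (move_last _ _ Hm) as (L & PL & HL). exists L. split; [|exact HL].
      eapply Forall_impl; [|exact PL]. intros p (Hp & w' & Hw'). split.
      * eapply Permutation_NoDup; [apply Permutation_sym; exact Hp|exact Hn].
      * exists w'. rewrite (setw_perm _ _ Hp). exact Hw'.
  - exists []. split; [constructor|]. simpl. apply rl_rel. now apply notnodup_repeat.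
Qed.

Lemma pair_nf v1 v2 : exists M, Forall (fun q => True) M /\ [[rn v1, rn v2]] =~ lsum rn M.
Proof.
  destruct v1 as [|x1 v1]. { exists []. split; [constructor|apply br0l]. }
  destruct v2 as [|x2 v2]. { exists []. split; [constructor|apply br0r]. }
  destruct (expand (x1 :: v1) ltac:(discriminate) (rn (x2 :: v2))) as (L & _ & HL).
  exists (mapw (fun e => e ++ x2 :: v2) L). split.
  - unfold mapw. apply Forall_forall. auto.
  - rewrite HL, lsum_mapw. apply lsum_ext. intro e. rewrite ad_rn by discriminate. reflexivity.
Qed.

Lemma nf_any e : exists L, Forall (fun q => True) L /\ e =~ lsum rn L.
Proof.
  induction e as [z| |a IHa b IHb|a IHa|a IHa b IHb].
  - exists [(true, [z])]. split; [repeat constructor|]. simpl. unfold term; simpl. symmetry; apply add0r.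
  - exists []. split; [constructor|reflexivity].
  - destruct IHa as (L1 & _ & H1), IHb as (L2 & _ & H2). exists (L1 ++ L2).
    split; [apply Forall_forall; auto|]. now rewrite lsum_app, H1, H2.
  - destruct IHa as (L1 & _ & H1). exists (flip L1).
    split; [apply Forall_forall; auto|]. now rewrite lsum_flip, H1.
  - destruct IHa as (L1 & _ & H1), IHb as (L2 & _ & H2).
    apply (ex_nf_proper (fun _ => True) rn _ (lsum (fun v => lsum (fun v2 => [[rn v, rn v2]]) L2) L1)).
    { rewrite H1, H2, lsum_brl. apply lsum_ext. intro; apply lsum_brr. }
    apply (lsum_exists (fun _ => True)). intros p _. apply (lsum_exists (fun _ => True)). intros q _. apply pair_nf.
Qed.

Lemma nf e : exists L, Forall (fun q => canon (snd q)) L /\ e =~ lsum rn L.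
Proof.
  destruct (nf_any e) as (L & _ & H). apply (ex_nf_proper canon rn _ _ H). apply (lsum_exists canon). intros p _. apply to_canon.
Qed.


Local Open Scope Z_scope.

Lemma delta_cons x a b : delta (x :: a) (x :: b) = delta a b.
Proof.
  destruct (ldeq a b) as [<-|H]; [rewrite !delta_eq; reflexivity|].
  rewrite !delta_neq; [reflexivity|exact H|]. intro C; inversion C; congruence.
Qed.

Lemma snoc_nonnil (l : list Y) x : l ++ [x] <> [].
Proof. destruct l; discriminate. Qed.

Lemma sem_rn_last v' : forall m, NoDup (v' ++ [m]) -> forall w, (exists w', w = w' ++ [m]) ->
  sem (rn (v' ++ [m])) w = delta (v' ++ [m]) w.
Proof.
  induction v' as [|x v'' IH]; intros m Hn w Hw.
  - reflexivity.
  - simpl app. rewrite rn_cons by apply snoc_nonnil. simpl sem.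
    apply NoDup_cons_iff in Hn as [Hx Hn].
    assert (E2 : conv (sem (rn (v'' ++ [m]))) (delta [x]) w = 0).
    { destruct (Z.eq_dec (conv (sem (rn (v'' ++ [m]))) (delta [x]) w) 0) as [E0|E0]; [exact E0|].
      exfalso. apply conv_support in E0 as (a & b & -> & _ & Hb).
      apply delta_nz in Hb. subst b. destruct Hw as (w' & Hw').
      apply app_inj_tail in Hw' as [_ Hxm]. subst. apply Hx. apply in_or_app. right. left. reflexivity. }
    rewrite E2, conv_d1_l.
    destruct w as [|x' w2].
    + destruct Hw as (w' & Hw'). destruct w'; discriminate.
    + destruct (deq x x') as [<-|Hne].
      * rewrite delta_cons. rewrite IH; [ring|exact Hn|].
        destruct Hw as (w' & Hw'). destruct w' as [|x0 w0].
        -- inversion Hw'. subst. exfalso. apply Hx. apply in_or_app. right. left. reflexivity.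
        -- inversion Hw'. subst. eauto.
      * rewrite delta_neq; [ring|]. intro C; inversion C; congruence.
Qed.

Lemma canon_rn v w : canon v -> canon w -> sem (rn v) w = delta v w.
Proof.
  intros [Hnv [v' Hv] ] [Hnw [w' Hw] ].
  remember (pick (setw v)) as m eqn:Hm.
  destruct (Z.eq_dec (sem (rn v) w) 0) as [E0|E0].
  - destruct (ldeq v w) as [<-|Hne].
    + exfalso. revert E0. rewrite Hv. rewrite sem_rn_last.
      * rewrite delta_eq. discriminate.
      * rewrite <- Hv. exact Hnv.
      * eauto.
    + rewrite delta_neq by exact Hne. exact E0.
  - pose proof (sem_rn_perm _ _ E0) as Hp.
    rewrite (setw_perm _ _ Hp) in Hw. rewrite <- Hm in Hw.
    rewrite Hv. rewrite sem_rn_last; [reflexivity| rewrite <- Hv; exact Hnv | eauto].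
Qed.

Definition sgn (s : bool) : Z := if s then 1 else -1.
Fixpoint cnt (w : list Y) (L : list (bool * list Y)) : Z :=
  match L with [] => 0 | p :: L' => sgn (fst p) * delta (snd p) w + cnt w L' end.

Lemma sem_lsum_canon L w : Forall (fun q => canon (snd q)) L -> canon w ->
  sem (lsum rn L) w = cnt w L.
Proof.
  intros HL Hw. induction L as [|[s v] L IH]; [reflexivity|].
  inversion HL; subst. cbn [lsum cnt sem]. rewrite IH by assumption.
  unfold term, sgn; destruct s; cbn [fst snd sem]; rewrite canon_rn by assumption; ring.
Qed.

Lemma cnt_app w A B : cnt w (A ++ B) = cnt w A + cnt w B.
Proof. induction A; simpl; [ring|]. rewrite IHA. ring. Qed.

Lemma partner s v R : ~ In (negb s, v) R -> 0 <= sgn s * cnt v R.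
Proof.
  induction R as [|[s' v'] R IH]; intro H; cbn [cnt fst snd]; [lia|].
  assert (H1 : ~ In (negb s, v) R) by (intro; apply H; right; assumption).
  specialize (IH H1).
  destruct (ldeq v' v) as [<-|Hne].
  - rewrite delta_eq. assert (s' = s).
    { destruct s, s'; simpl in *; auto; exfalso; apply H; left; reflexivity. }
    subst. destruct s; unfold sgn in *; lia.
  - rewrite delta_neq by exact Hne. lia.
Qed.

Lemma lsum_mid f R1 p R2 : lsum f (R1 ++ p :: R2) =~ term f p +' lsum f (R1 ++ R2).
Proof. rewrite !lsum_app. simpl. apply add_swap. Qed.

Lemma group (P : list Y -> Prop) n : forall L, (length L <= n)%nat ->
  (forall w, In w (map snd L) -> P w -> cnt w L = 0) ->
  exists L', Forall (fun q => ~ P (snd q)) L' /\ incl (map snd L') (map snd L) /\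
    lsum rn L =~ lsum rn L'.
Proof.
  induction n as [|n IH]; intros L Hlen H.
  - destruct L; [|simpl in Hlen; lia]. exists []. split; [constructor|split; [apply incl_refl|reflexivity] ].
  - destruct L as [|[s v] R].
    + exists []. split; [constructor|split; [apply incl_refl|reflexivity] ].
    + simpl in Hlen. destruct (classic (P v)) as [Hv|Hv].
      * assert (Hc : cnt v ((s, v) :: R) = 0) by (apply H; [left; reflexivity|exact Hv]).
        cbn [cnt fst snd] in Hc. rewrite delta_eq in Hc.
        assert (Hin : In (negb s, v) R).
        { apply NNPP. intro Hn. apply partner in Hn. destruct s; unfold sgn in *; cbn [negb] in *; lia. }
        destruct (in_split _ _ Hin) as (R1 & R2 & ->).
        assert (Hcnt : forall w, cnt w ((s, v) :: R1 ++ (negb s, v) :: R2) = cnt w (R1 ++ R2)).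
        { intro w. cbn [cnt fst snd]. rewrite !cnt_app. cbn [cnt fst snd]. destruct s; unfold sgn; cbn [negb]; ring. }
        assert (Hincl : incl (map snd (R1 ++ R2)) (map snd ((s, v) :: R1 ++ (negb s, v) :: R2))).
        { intros w Hw. rewrite map_app in Hw. simpl. right. rewrite map_app. simpl.
          apply in_app_or in Hw as [Hw|Hw]; apply in_or_app; [left|right; right]; exact Hw. }
        destruct (IH (R1 ++ R2)) as (L' & HP & Hi & HE).
        { rewrite length_app. rewrite length_app in Hlen. simpl in Hlen. lia. }
        { intros w Hw Hp. rewrite <- Hcnt. apply H; [apply Hincl; exact Hw|exact Hp]. }
        exists L'. split; [exact HP|]. split; [eapply incl_tran; eauto|].
        simpl. rewrite lsum_mid, rl_addA, <- HE.
        assert (Ht : term rn (s, v) +' term rn (negb s, v) =~ LZero).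
        { unfold term; destruct s; simpl; [apply addrN|apply rl_addN]. }
        rewrite Ht. apply rl_add0.
      * destruct (IH R) as (L' & HP & Hi & HE).
        { lia. }
        { intros w Hw Hp. assert (Hne : v <> w) by (intro; subst; contradiction).
          assert (Hc : cnt w ((s, v) :: R) = 0) by (apply H; [right; exact Hw|exact Hp]).
          cbn [cnt fst snd] in Hc. rewrite delta_neq in Hc by exact Hne. lia. }
        exists ((s, v) :: L'). split; [constructor; assumption|]. split.
        -- intros w Hw. simpl in Hw |- *. destruct Hw as [Hw|Hw]; [left; exact Hw|right; apply Hi; exact Hw].
        -- simpl. now rewrite HE.
Qed.

Lemma canon_in (L : list (bool * list Y)) w : Forall (fun q => canon (snd q)) L -> In w (map snd L) -> canon w.
Proof.
  intros HL Hw. apply in_map_iff in Hw as ([s v] & <- & Hin).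
  rewrite Forall_forall in HL. exact (HL _ Hin).
Qed.

Lemma inj e : (forall w, NoDup w -> sem e w = 0) -> e =~ LZero.
Proof.
  intro H. destruct (nf e) as (L & HL & HE).
  destruct (group (fun _ => True) (length L) L (le_n _)) as (L' & HP & _ & HE').
  { intros w Hw _. pose proof (canon_in _ _ HL Hw) as Hc.
    rewrite <- sem_lsum_canon by assumption. rewrite <- (sound _ _ HE) by apply Hc. apply H, Hc. }
  destruct L' as [|p L']; [|inversion HP; contradiction].
  rewrite HE, HE'. reflexivity.
Qed.

Lemma ideal_rn v : In y0 v -> rl_ideal_gen Y y0 (rn v).
Proof.
  induction v as [|x v IH]; intro H; [destruct H|].
  destruct v as [|z v'].
  - destruct H as [<-|[] ]. apply rli_gen.
  - rewrite rn_cons by discriminate. destruct H as [<-|H].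
    + apply rli_brr, rli_gen.
    + apply rli_brl, IH, H.
Qed.

Lemma ideal_lsum L : Forall (fun q => In y0 (snd q)) L -> rl_ideal_gen Y y0 (lsum rn L).
Proof.
  induction L as [|[s v] L IH]; intro H; simpl; [apply rli_zero|].
  inversion H; subst. apply rli_add; [|apply IH; assumption].
  unfold term; destruct s; simpl; [|apply rli_opp]; apply ideal_rn; assumption.
Qed.

Lemma ideal_vanish u : rl_ideal_gen Y y0 u -> forall w, NoDup w -> ~ In y0 w -> sem u w = 0.
Proof.
  induction 1 as [| |a b _ IHa _ IHb|a _ IHa|a b _ IHa|a b _ IHa|a b Hab _ IHa];
    intros w Hn Hy; simpl.
  - apply delta_neq. intro C; subst; apply Hy; left; reflexivity.
  - reflexivity.
  - rewrite IHa, IHb by assumption. ring.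
  - rewrite IHa by assumption. ring.
  - assert (K : forall f g, (forall q, (exists p, w = p ++ q) -> g q = 0) -> conv f g w = 0).
    { intros f g Hg. destruct (Z.eq_dec (conv f g w) 0) as [E0|E0]; [exact E0|].
      apply conv_support in E0 as (p & q & Hw & _ & Hq). exfalso. apply Hq, Hg. eauto. }
    assert (K' : forall f g, (forall p, (exists q, w = p ++ q) -> f p = 0) -> conv f g w = 0).
    { intros f g Hf. destruct (Z.eq_dec (conv f g w) 0) as [E0|E0]; [exact E0|].
      apply conv_support in E0 as (p & q & Hw & Hp & _). exfalso. apply Hp, Hf. eauto. }
    rewrite K, K'; [ring| |].
    + intros x (z & Hz). subst w. apply IHa; [first [eapply NoDup_app_remove_l; exact Hn | eapply NoDup_app_remove_r; exact Hn]|].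
      intro C; apply Hy; apply in_or_app; auto.
    + intros x (z & Hz). subst w. apply IHa; [first [eapply NoDup_app_remove_l; exact Hn | eapply NoDup_app_remove_r; exact Hn]|].
      intro C; apply Hy; apply in_or_app; auto.
  - assert (K : forall f g, (forall q, (exists p, w = p ++ q) -> g q = 0) -> conv f g w = 0).
    { intros f g Hg. destruct (Z.eq_dec (conv f g w) 0) as [E0|E0]; [exact E0|].
      apply conv_support in E0 as (p & q & Hw & _ & Hq). exfalso. apply Hq, Hg. eauto. }
    assert (K' : forall f g, (forall p, (exists q, w = p ++ q) -> f p = 0) -> conv f g w = 0).
    { intros f g Hf. destruct (Z.eq_dec (conv f g w) 0) as [E0|E0]; [exact E0|].
      apply conv_support in E0 as (p & q & Hw & Hp & _). exfalso. apply Hp, Hf. eauto. }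
    rewrite K', K; [ring| |].
    + intros x (z & Hz). subst w. apply IHa; [first [eapply NoDup_app_remove_l; exact Hn | eapply NoDup_app_remove_r; exact Hn]|].
      intro C; apply Hy; apply in_or_app; auto.
    + intros x (z & Hz). subst w. apply IHa; [first [eapply NoDup_app_remove_l; exact Hn | eapply NoDup_app_remove_r; exact Hn]|].
      intro C; apply Hy; apply in_or_app; auto.
  - rewrite <- (sound _ _ Hab) by exact Hn. apply IHa; assumption.
Qed.

Lemma sem_br_y u w : w <> [] -> NoDup (w ++ [y0]) -> sem [[u, LGen y0]] (w ++ [y0]) = sem u w.
Proof.
  intros Hne Hn. simpl sem. rewrite conv_d1_r_snoc, conv_d1_l.
  destruct w as [|x w']; [congruence|]. cbn iota beta delta [app].
  destruct (deq y0 x) as [<-|Hx]; [|ring].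
  exfalso. apply (NoDup_remove_2 _ _ _ Hn). rewrite app_nil_r. left. reflexivity.
Qed.

Lemma sem_br_y_zero u : (forall w, NoDup w -> ~ In y0 w -> sem u w = 0) ->
  forall w, NoDup w -> sem [[u, LGen y0]] w = 0.
Proof.
  intros H w Hn. simpl sem. rewrite conv_d1_l.
  assert (E1 : conv (sem u) (delta [y0]) w = 0).
  { destruct (Z.eq_dec (conv (sem u) (delta [y0]) w) 0) as [E0|E0]; [exact E0|].
    apply conv_support in E0 as (a & b & -> & Ha & Hb). exfalso.
    apply delta_nz in Hb. subst b. apply Ha, H.
    - eapply NoDup_app_remove_r; eauto.
    - intro C. apply (NoDup_remove_2 _ _ _ Hn). rewrite app_nil_r. exact C. }
  rewrite E1. destruct w as [|x w']; [ring|].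
  destruct (deq y0 x) as [<-|_]; [|ring].
  apply NoDup_cons_iff in Hn as [Hx Hn']. rewrite H by assumption. ring.
Qed.

Theorem main u : rl_centralizer Y y0 u <-> rl_ideal_gen Y y0 u.
Proof.
  unfold rl_centralizer. split.
  - intro C. destruct (nf u) as (L & HL & HE).
    destruct (group (fun w => ~ In y0 w) (length L) L (le_n _)) as (L' & HP & _ & HE').
    { intros w Hw Hy. pose proof (canon_in _ _ HL Hw) as Hc.
      rewrite <- sem_lsum_canon by assumption. rewrite <- (sound _ _ HE) by apply Hc.
      destruct Hc as [Hnd [w' Hw'] ].
      assert (Hn2 : NoDup (w ++ [y0])).
      { eapply Permutation_NoDup; [apply Permutation_cons_append|]. constructor; assumption. }
      rewrite <- sem_br_y by (try assumption; rewrite Hw'; apply snoc_nonnil).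
      rewrite (sound _ _ C) by exact Hn2. reflexivity. }
    apply (rli_eq _ _ (lsum rn L')).
    + rewrite HE, HE'. reflexivity.
    + apply ideal_lsum. eapply Forall_impl; [|exact HP]. intros q Hq. simpl in Hq. apply NNPP. exact Hq.
  - intro I. apply inj. apply sem_br_y_zero. apply ideal_vanish. exact I.
Qed.

End Main.

Theorem lemma2p17 (Y : Type) (y : Y) (u : lexpr Y) :
  rl_centralizer Y y u <-> rl_ideal_gen Y y u.
Proof. exact (main Y y u). Qed.
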